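(* Let $\mathbf x_1,\dots,\mathbf x_l\in\mathbb{R}^n$ and $y_1,\dots,y_l\in\{1,-1\}$; set $\bar{\mathbf x}_i=y_i\mathbf x_i$ and let $\overline{\mathbf X}\in\mathbb{R}^{l\times n}$ have $i$-th row $\bar{\mathbf x}_i^T$. For $C>0$ consider the SVM problem $$\min_{\mathbf w}\tfrac12\|\mathbf w\|^2+C\sum_{i=1}^l\big[1-\mathbf w^T(y_i\mathbf x_i)\big]_+$$ with optimal solution $\mathbf w^*(C)$, and its dual $\min_{\theta\in[0,1]^l}\frac C2\|\overline{\mathbf X}^T\theta\|^2-\sum_{i=1}^l\theta_i$ with optimal solution $\theta^*(C)$. Let $0<C_1<\dots<C_{\mathcal K}$ and suppose $\theta^*(C_k)$ is known for some integer $1\le k<\mathcal K$. If $$\tfrac{C_{k+1}+C_k}{2}\langle\overline{\mathbf X}^T\theta^*(C_k),\bar{\mathbf x}_i\rangle-\tfrac{C_{k+1}-C_k}{2}\|\overline{\mathbf X}^T\theta^*(C_k)\|\,\|\bar{\mathbf x}_i\|>1,$$ then $[\theta^*(C_{k+1})]_i=0$, i.e., $i\in\mathcal R$ (at $C=C_{k+1}$). Similarly, if $$\tfrac{C_{k+1}+C_k}{2}\langle\overline{\mathbf X}^T\theta^*(C_k),\bar{\mathbf x}_i\rangle+\tfrac{C_{k+1}-C_k}{2}\|\overline{\mathbf X}^T\theta^*(C_k)\|\,\|\bar{\mathbf x}_i\|<1,$$ then $[\theta^*(C_{k+1})]_i=1$, i.e., $i\in\mathcal L$.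
   Context: $[t]_+=\max\{t,0\}$. Primal and dual solutions satisfy $\mathbf w^*(C)=C\overline{\mathbf X}^T\theta^*(C)$. At parameter $C$: $\mathcal R=\{i:\langle\mathbf w^*(C),\bar{\mathbf x}_i\rangle>1\}$ and $\mathcal L=\{i:\langle\mathbf w^*(C),\bar{\mathbf x}_i\rangle<1\}$. *)

(* Defs.v *)
From HB Require Import structures.
From mathcomp Require Import all_boot all_order all_algebra.
Set Implicit Arguments. Unset Strict Implicit. Unset Printing Implicit Defensive.
Import Order.TTheory GRing.Theory Num.Theory.
Local Open Scope ring_scope.

Section SVM.
Variables (R : rcfType) (l n : nat).

Definition dotv (u v : 'rV[R]_n) : R := (u *m v^T) 0 0.
Definition normv (u : 'rV[R]_n) : R := Num.sqrt (dotv u u).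

Definition xbar (x : 'I_l -> 'rV[R]_n) (y : 'I_l -> R) (i : 'I_l) : 'rV[R]_n :=
  y i *: x i.

Definition Xbar (x : 'I_l -> 'rV[R]_n) (y : 'I_l -> R) : 'M[R]_(l, n) :=
  \matrix_(i < l) xbar x y i.

(* Xbar^T theta, written as the row vector theta *m Xbar (= (Xbar^T theta)^T) *)
Definition XbarT (x : 'I_l -> 'rV[R]_n) (y : 'I_l -> R) (theta : 'rV[R]_l)
  : 'rV[R]_n := theta *m Xbar x y.

Definition primal_obj x y (C : R) (w : 'rV[R]_n) : R :=
  2^-1 * normv w ^+ 2 + C * \sum_(i < l) Num.max 0 (1 - dotv w (y i *: x i)).

Definition primal_opt x y (C : R) (w : 'rV[R]_n) : Prop :=
  forall w', primal_obj x y C w <= primal_obj x y C w'.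

Definition dual_obj x y (C : R) (theta : 'rV[R]_l) : R :=
  C / 2 * normv (XbarT x y theta) ^+ 2 - \sum_(i < l) theta 0 i.

Definition in_box (theta : 'rV[R]_l) : Prop :=
  forall i, 0 <= theta 0 i <= 1.

Definition dual_opt x y (C : R) (theta : 'rV[R]_l) : Prop :=
  in_box theta /\ forall theta', in_box theta' -> dual_obj x y C theta <= dual_obj x y C theta'.

End SVM.

(* Main.v *)
Require Import Defs.
From HB Require Import structures.
From mathcomp Require Import all_boot all_order all_algebra.
From mathcomp Require Import ring lra.
Import Order.TTheory GRing.Theory Num.Theory.
Local Open Scope ring_scope.

Section H.
Variables (R : rcfType) (l n : nat).
Implicit Types (u v w : 'rV[R]_n).

Lemma dotvE u v : dotv u v = \sum_j u 0 j * v 0 j.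
Proof. rewrite /dotv !mxE; apply: eq_bigr => j _; rewrite !mxE. done. Qed.

Lemma dotvC u v : dotv u v = dotv v u.
Proof. rewrite !dotvE; apply: eq_bigr => j _; exact: mulrC. Qed.

Lemma dotvDl u v w : dotv (u + v) w = dotv u w + dotv v w.
Proof. rewrite !dotvE -big_split /=; apply: eq_bigr => j _; rewrite !mxE mulrDl. done. Qed.

Lemma dotvZl (a : R) u w : dotv (a *: u) w = a * dotv u w.
Proof. rewrite !dotvE mulr_sumr; apply: eq_bigr => j _; rewrite !mxE mulrA. done. Qed.

Lemma dotvNl u w : dotv (- u) w = - dotv u w.
Proof. by rewrite -scaleN1r dotvZl mulN1r. Qed.

Lemma dotvDr u v w : dotv w (u + v) = dotv w u + dotv w v.
Proof. by rewrite dotvC dotvDl !(dotvC w). Qed.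

Lemma dotvZr (a : R) u w : dotv w (a *: u) = a * dotv w u.
Proof. by rewrite dotvC dotvZl dotvC. Qed.

Lemma dotvNr u w : dotv w (- u) = - dotv w u.
Proof. by rewrite dotvC dotvNl dotvC. Qed.

Lemma dotv_ge0 u : 0 <= dotv u u.
Proof. rewrite dotvE; apply: sumr_ge0 => j _; rewrite -expr2; exact: sqr_ge0. Qed.

Lemma normv_sq u : normv u ^+ 2 = dotv u u.
Proof. by rewrite /normv sqr_sqrtr // dotv_ge0. Qed.

Lemma normv_ge0 u : 0 <= normv u.
Proof. exact: sqrtr_ge0. Qed.

Lemma cs_sq u v : dotv u v ^+ 2 <= dotv u u * dotv v v.
Proof.
have q t : 0 <= dotv u u + 2 * t * dotv u v + t ^+ 2 * dotv v v.
  have := dotv_ge0 (u + t *: v).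
  rewrite !dotvDl !dotvDr !dotvZl !dotvZr (dotvC v u).
  by move=> h; apply: (le_trans h); rewrite le_eqVlt; apply/orP; left; apply/eqP; ring.
have hA := dotv_ge0 u; have hC := dotv_ge0 v.
move: q hA hC; generalize (dotv u u) (dotv u v) (dotv v v) => A B C q hA hC.
have [C0|Cpos] := eqVneq C 0.
  have [B0|Bn0] := eqVneq B 0.
    by rewrite B0 C0 mulr0 expr0n /=.
  have := q (- (A + 1) / (2 * B)).
  rewrite C0 mulr0.
  have -> : 2 * (- (A + 1) / (2 * B)) * B = - (A + 1).
    by field.
  lra.
have Cp : 0 < C by rewrite lt_def Cpos hC.
have := q (- B / C).
have -> : A + 2 * (- B / C) * B + (- B / C) ^+ 2 * C = (A * C - B ^+ 2) / C.
  by field.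
rewrite pmulr_lge0 ?invr_gt0 //; lra.
Qed.

Lemma cs_low u v : - (normv u * normv v) <= dotv u v.
Proof.
have h := cs_sq u v.
have hn : 0 <= normv u * normv v by rewrite mulr_ge0 // normv_ge0.
have : dotv u v ^+ 2 <= (normv u * normv v) ^+ 2 by rewrite exprMn !normv_sq.
nra.
Qed.

Lemma XbarTD (x : 'I_l -> 'rV[R]_n) (y : 'I_l -> R) (a b : 'rV[R]_l) : XbarT x y (a + b) = XbarT x y a + XbarT x y b.
Proof. exact: mulmxDl. Qed.
Lemma XbarTB (x : 'I_l -> 'rV[R]_n) (y : 'I_l -> R) (a b : 'rV[R]_l) : XbarT x y (a - b) = XbarT x y a - XbarT x y b.
Proof. exact: mulmxBl. Qed.
Lemma XbarTZ (x : 'I_l -> 'rV[R]_n) (y : 'I_l -> R) (c : R) (a : 'rV[R]_l) : XbarT x y (c *: a) = c *: XbarT x y a.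
Proof. by rewrite /XbarT scalemxAl. Qed.
Lemma XbarTe (x : 'I_l -> 'rV[R]_n) (y : 'I_l -> R) i : XbarT x y (delta_mx 0 i) = xbar x y i.
Proof. by rewrite /XbarT -rowE rowK. Qed.

Lemma small_t (g p : R) : (forall t, 0 < t -> t <= 1 -> 0 <= t * g + t ^+ 2 * p) ->
  0 <= p -> 0 <= g.
Proof.
move=> H hp; rewrite leNgt; apply/negP => gn.
have hd : 0 < - g + p + 1 by lra.
have := H (- g / (- g + p + 1)).
rewrite divr_gt0 ?oppr_gt0 // ler_pdivrMr // mul1r.
have -> : - g / (- g + p + 1) * g + (- g / (- g + p + 1)) ^+ 2 * p
   = (- g) * (g * (1 - g)) / (- g + p + 1) ^+ 2.
  by field; rewrite gt_eqF.
have hd2 : 0 < (- g + p + 1) ^+ 2 by rewrite exprn_gt0.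
rewrite pmulr_lge0 ?invr_gt0 //.
move=> h; have : 0 <= (- g) * (g * (1 - g)) by apply: h => //; lra.
nra.
Qed.

Lemma VI (x : 'I_l -> 'rV[R]_n) (y : 'I_l -> R) (C : R) (th th' : 'rV[R]_l) : 0 <= C -> dual_opt x y C th -> in_box th' ->
  0 <= C * dotv (XbarT x y th) (XbarT x y th' - XbarT x y th)
       - (\sum_j th' 0 j - \sum_j th 0 j).
Proof.
move=> hC [hb hopt] hb'.
set a := XbarT x y th; set b := XbarT x y th' - a.
set S := \sum_j th 0 j; set D := \sum_j th' 0 j - S.
apply: (@small_t _ (C / 2 * dotv b b)); last first.
  by rewrite mulr_ge0 ?dotv_ge0 // divr_ge0.
move=> t t0 t1.
have hbox : in_box (th + t *: (th' - th)).
  move=> j; rewrite !mxE.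
  have := hb j; have := hb' j; move=> /andP [h1 h2] /andP [h3 h4].
  apply/andP; split; nra.
have h := hopt _ hbox.
rewrite /dual_obj !normv_sq XbarTD XbarTZ XbarTB -/a -/b in h.
have E : \sum_j (th + t *: (th' - th)) 0 j = S + t * D.
  rewrite /D /S mulrBr mulr_sumr mulr_sumr -sumrB -big_split /=.
  by apply: eq_bigr => j _; rewrite !mxE; ring.
rewrite E -/S !dotvDl !dotvDr !dotvZl !dotvZr (dotvC b a) in h.
move: h; generalize (dotv a a) (dotv a b) (dotv b b) => p q r h.
have -> : t * (C * q - D) + t ^+ 2 * (C / 2 * r) =
  (C / 2 * (p + t * q + (t * q + t * (t * r))) - (S + t * D)) - (C / 2 * p - S) :> R.
  by field.
lra.
Qed.


Lemma sum_delta (th : 'rV[R]_l) (c : R) (i : 'I_l) :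
  \sum_j (th + c *: delta_mx 0 i) 0 j = \sum_j th 0 j + c.
Proof.
have -> : \sum_j (th + c *: delta_mx 0 i) 0 j = \sum_j (th 0 j + c * (j == i)%:R).
  by apply: eq_bigr => j _; rewrite !mxE.
rewrite big_split /=; congr (_ + _).
rewrite -mulr_sumr (bigD1 i) //= eqxx big1 ?addr0 ?mulr1 //.
by move=> j hj; rewrite (negbTE hj).
Qed.

Lemma kkt (x : 'I_l -> 'rV[R]_n) (y : 'I_l -> R) (C : R) (th : 'rV[R]_l) i c :
  0 <= C -> dual_opt x y C th -> 0 <= th 0 i + c <= 1 ->
  0 <= c * (dotv (C *: XbarT x y th) (xbar x y i) - 1).
Proof.
move=> hC hd hic.
have hb : in_box (th + c *: delta_mx 0 i).
  move=> j; rewrite !mxE /=; have [->|hj] := eqVneq j i; first by rewrite mulr1.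
  by rewrite mulr0 addr0; exact: hd.1.
have := @VI x y C th _ hC hd hb.
have e1 (u v : 'rV[R]_n) : u + v - u = v by rewrite addrC addKr.
have e2 (s t : R) : s + t - s = t by rewrite addrC addKr.
rewrite XbarTD XbarTZ XbarTe sum_delta e1 e2 dotvZr dotvZl.
move=> h; rewrite mulrBr mulr1; lra.
Qed.

End H.
Arguments VI {R l n x y C th th'}.
Arguments kkt {R l n x y C th} i c.
Arguments cs_low {R n} u v.
Arguments dotvC {R n} u v.
Arguments dotv_ge0 {R n} u.
Arguments normv_ge0 {R n} u.
Arguments normv_sq {R n} u.

Theorem corollary3 (R : rcfType) (l n : nat)
  (x : 'I_l -> 'rV[R]_n) (y : 'I_l -> R)
  (hy : forall i, y i = 1 \/ y i = -1)
  (K : nat) (C : nat -> R)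
  (hCpos : 0 < C 1%N)
  (hCinc : forall j, (1 <= j)%N -> (j < K)%N -> C j < C j.+1)
  (k : nat) (hk1 : (1 <= k)%N) (hkK : (k < K)%N)
  (thk thk1 : 'rV[R]_l) (w1 : 'rV[R]_n)
  (hthk : dual_opt x y (C k) thk)
  (hthk1 : dual_opt x y (C k.+1) thk1)
  (hw1 : primal_opt x y (C k.+1) w1)
  (hw1th : w1 = C k.+1 *: XbarT x y thk1)
  (i : 'I_l) :
  ((C k.+1 + C k) / 2 * dotv (XbarT x y thk) (xbar x y i)
     - (C k.+1 - C k) / 2 * normv (XbarT x y thk) * normv (xbar x y i) > 1 ->
   thk1 0 i = 0 /\ dotv w1 (xbar x y i) > 1)
  /\
  ((C k.+1 + C k) / 2 * dotv (XbarT x y thk) (xbar x y i)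
     + (C k.+1 - C k) / 2 * normv (XbarT x y thk) * normv (xbar x y i) < 1 ->
   thk1 0 i = 1 /\ dotv w1 (xbar x y i) < 1).
Proof.
have Cle : forall j, (1 <= j)%N -> (j <= K)%N -> C 1%N <= C j.
  elim=> // j IH _ hj.
  case: j IH hj => [|j] IH hj; first by [].
  apply: le_trans (IH isT (ltnW hj)) _.
  by apply: ltW; apply: hCinc.
have Ckp : 0 < C k by apply: lt_le_trans hCpos (Cle _ hk1 (ltnW hkK)).
have Ck1 : C k < C k.+1 by apply: hCinc.
have h1 := VI (ltW Ckp) hthk hthk1.1.
have h2 := VI (ltW (lt_trans Ckp Ck1)) hthk1 hthk.1.
set uk := XbarT x y thk in h1 h2 *.
set u1 := XbarT x y thk1 in h1 h2 hw1th.
set xb := xbar x y i.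
set m := (C k.+1 + C k) / 2.
set r := (C k.+1 - C k) / 2.
set d := w1 - m *: uk.
have hcs := cs_low d xb.
have ed : dotv d d = C k.+1 ^+ 2 * dotv u1 u1 - 2 * m * C k.+1 * dotv u1 uk
   + m ^+ 2 * dotv uk uk.
  rewrite /d hw1th !dotvDl !dotvDr !dotvNl !dotvNr !dotvZl !dotvZr (dotvC uk u1).
  ring.
have exb : dotv w1 xb = m * dotv uk xb + dotv d xb.
  by rewrite /d dotvDl dotvNl dotvZl; ring.
move: h1 h2; rewrite !dotvDr !dotvNr (dotvC uk u1).
move=> h1 h2.
have hball : dotv d d <= r ^+ 2 * dotv uk uk.
  rewrite ed /m /r.
  have hC1 : 0 < C k.+1 by lra.
  move: h1 h2; generalize (dotv u1 u1) (dotv u1 uk) (dotv uk uk)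
    (\sum_j thk1 0 j) (\sum_j thk 0 j) => A B Q S1 Sk h1 h2.
  have e : C k.+1 ^+ 2 * A - 2 * ((C k.+1 + C k) / 2) * C k.+1 * B +
      ((C k.+1 + C k) / 2) ^+ 2 * Q - ((C k.+1 - C k) / 2) ^+ 2 * Q
      = - C k.+1 * ((C k * (B - Q) - (S1 - Sk)) + (C k.+1 * (B - A) - (Sk - S1))).
    by field.
  rewrite -subr_le0 e; nra.
have hr : 0 <= r by rewrite /r; lra.
have hnd : normv d <= r * normv uk.
  have hb : 0 <= r * normv uk by rewrite mulr_ge0 // normv_ge0.
  have hsq : normv d ^+ 2 <= (r * normv uk) ^+ 2 by rewrite exprMn !normv_sq.
  have ha := normv_ge0 d.
  move: hb hsq ha; generalize (normv d) (r * normv uk) => a b hb hsq ha.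
  rewrite leNgt; apply/negP => hab.
  have : b ^+ 2 < a ^+ 2 by rewrite ltr_pXn2r // ?nnegrE // (le_trans hb (ltW hab)).
  lra.
have hnx := normv_ge0 xb.
have hnu := normv_ge0 uk.
have low : m * dotv uk xb - r * normv uk * normv xb <= dotv w1 xb.
  rewrite exb; nra.
have up : dotv w1 xb <= m * dotv uk xb + r * normv uk * normv xb.
  have hcs' := cs_low (- d) xb.
  rewrite dotvNl /normv dotvNl dotvNr opprK -/(normv d) -/(normv xb) in hcs'.
  have := ler_wpM2r hnx hnd. rewrite exb; lra.
have hw : dotv (C k.+1 *: XbarT x y thk1) xb = dotv w1 xb by rewrite hw1th.
have hb1 := hthk1.1 i.
have hC1 : 0 <= C k.+1 by lra.
split => H.
  have hgt : dotv w1 xb > 1 by lra.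
  split => //.
  have := kkt i (- thk1 0 i) hC1 hthk1.
  rewrite hw addrN lexx /= ler01 => /(_ isT) h.
  move/andP: hb1 => [hb1 hb2]; nra.
have hlt : dotv w1 xb < 1 by lra.
split => //.
have := kkt i (1 - thk1 0 i) hC1 hthk1.
rewrite hw addrC subrK lexx ler01 /= => /(_ isT) h.
move/andP: hb1 => [hb1 hb2]; nra.
Qed.
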